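(* For any encoding-decoding functions $(f^{(n)},g^{(n)})$ such that \begin{align} \frac{1}{n}\log L&\leq R^{\mathrm{c}},~ \frac{1}{n}\log M\geq R^{\mathrm{i}}, \end{align} given any deterministic function $h^{(n)}$ and any distortion level $D$, we have \begin{align} \mathrm{P}_\mathrm{c}^{(n)}(f^{(n)},g^{(n)},h^{(n)},D) &\leq P_{W\mathbf{T}}\Bigg\{\bigcap_{i=1}^7\mathcal{A}_i(W)\Bigg\}+6e^{-n\eta}. \end{align}
   Context: Setting (content identification with lossy recovery): finite alphabets $\mathcal{X},\mathcal{Y},\mathcal{Z},\hat{\mathcal{X}}$, distortion $d$ with $d(x^n,\hat{x}^n)=\frac1n\sum_i d(x_i,\hat{x}_i)$. $M$ feature vectors $X^n(m)$ i.i.d. $P_X^n$; $Y^n(m)$ is the output of DMC $P_{Y|X}$ with input $X^n(m)$; $S(m)=f^{(n)}(Y^n(m))\in\{1,\ldots,L\}$ with deterministic $f^{(n)}$; $W$ uniform on $\{1,\ldots,M\}$ independent of all; $Z^n$ is the output of DMC $P_{Z|X}$ with input $X^n(W)$; $\hat{W}=g^{(n)}(S(1),\ldots,S(M),Z^n)$, with decoding regions $\mathcal{D}(s^M,w)=\{z^n:g^{(n)}(s^M,z^n)=w\}$; $\hat{X}^n=h^{(n)}(S(\hat{W}),Z^n)$. $\mathrm{P}_\mathrm{c}^{(n)}(f^{(n)},g^{(n)},h^{(n)},D)=\Pr\{\hat{W}=W,~d(X^n(W),\hat{X}^n)\leq D\}$. Let $\mathbf{t}=(x^n(1),\ldots,x^n(M),y^n(1),\ldots,y^n(M),s(1),\ldots,s(M),z^n,\hat{x}^n)$,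 and let $P_{W\mathbf{T}}$ be the joint distribution of $(W,\mathbf{T})$ with $\mathbf{T}=(X^n(1..M),Y^n(1..M),S(1..M),Z^n,\hat{X}^n)$, where (as a bound device) $\hat{X}^n$ is generated as $h^{(n)}(S(W),Z^n)$, i.e. $P_{W\mathbf{T}}(w,\mathbf{t})=\frac{1}{M}\prod_{m=1}^M P_X^n(x^n(m))P_{Y|X}^n(y^n(m)|x^n(m))1\{s(m)=f^{(n)}(y^n(m))\}\cdot P_{Z|X}^n(z^n|x^n(w))1\{\hat{x}^n=h^{(n)}(s(w),z^n)\}$. For every $w$ the joint law of $(X^n(w),Y^n(w),S(w),Z^n,\hat{X}^n)$ under $P_{W\mathbf{T}}$ given $W=w$ is the same distribution $P_{X^nY^nSZ^n\hat{X}^n}$; all $P$'s below ($P_{Y^n},P_{Z^n|Y^n},P_{X^n|Y^nZ^n},P_{X^nY^n|SZ^n},P_{Y^nZ^n},P_{Z^n|S}$) are induced by it. Let $Q_{Y^n},Q_{Z^n|SY^n},Q_{X^n|SY^nZ^n},Q_{X^nY^n|SZ^n\hat{X}^n},Q_{Y^nZ^n|S},Q_{Z^n}$ be arbitrary distributions and $\eta>0$. For $w\in\{1,\ldots,M\}$ define the sets of $\mathbf{t}$: $\mathcal{A}_1(w):\ \frac{1}{n}\log\frac{P_{Y^n}(y^n(w))}{Q_{Y^n}(y^n(w))}\geq -\eta$; $\mathcal{A}_2(w):\ \frac{1}{n}\log\frac{P_{Z^n|Y^n}(z^n|y^n(w))}{Q_{Z^n|SY^n}(z^n|s(w),y^n(w))}\geq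 -\eta$; $\mathcal{A}_3(w):\ \frac{1}{n}\log\frac{P_{X^n|Y^nZ^n}(x^n(w)|y^n(w),z^n)}{Q_{X^n|SY^nZ^n}(x^n(w)|s(w),y^n(w),z^n)}\geq -\eta$; $\mathcal{A}_4(w):\ \frac{1}{n}\log\frac{P_{X^nY^n|SZ^n}(x^n(w),y^n(w)|s(w),z^n)}{Q_{X^nY^n|SZ^n\hat{X}^n}(x^n(w),y^n(w)|s(w),z^n,\hat{x}^n)}\geq -\eta$; $\mathcal{A}_5(w):\ R^{\mathrm{c}}\geq \frac{1}{n}\log \frac{Q_{Y^nZ^n|S}(y^n(w),z^n|s(w))}{P_{Y^nZ^n}(y^n(w),z^n)}-\eta$; $\mathcal{A}_6(w):\ R^{\mathrm{i}}\leq \frac{1}{n}\log\frac{P_{Z^n|S}(z^n|s(w))}{Q_{Z^n}(z^n)}+\eta$; $\mathcal{A}_7(w):\ d(x^n(w),\hat{x}^n)\leq D$. *)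

(* Defs.v *)
From mathcomp Require Import all_boot all_order all_algebra.
From mathcomp Require Import all_classical all_reals all_analysis.
Set Implicit Arguments. Unset Strict Implicit. Unset Printing Implicit Defensive.
Import Order.TTheory GRing.Theory Num.Theory.
Local Open Scope ring_scope.

Notation vec n T := {ffun 'I_n -> T}.

Section Model.
Variable R : realType.

Definition is_pmf (T : finType) (P : T -> R) : Prop :=
  (forall t, 0 <= P t) /\ \sum_t P t = 1.

Definition is_cond_pmf (A B : finType) (Q : A -> B -> R) : Prop :=
  forall a, is_pmf (Q a).

Variables (X Y Z Xh : finType).

Definition iid_n (n : nat) (P : X -> R) (x : vec n X) : R := \prod_i P (x i).

Definition dmc_n (A B : finType) (n : nat) (W : A -> B -> R)
  (a : vec n A) (b : vec n B) : R := \prod_i W (a i) (b i).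

Definition distn (n : nat) (d : X -> Xh -> R) (x : vec n X) (xh : vec n Xh) : R :=
  n%:R^-1 * \sum_i d (x i) (xh i).

Variables (n M L : nat) (PX : X -> R) (PYX : X -> Y -> R) (PZX : X -> Z -> R).
Variables (f : vec n Y -> 'I_L) (h : 'I_L -> vec n Z -> vec n Xh).

Definition Pjoint (x : vec n X) (y : vec n Y) (s : 'I_L) (z : vec n Z)
  (xh : vec n Xh) : R :=
  iid_n PX x * dmc_n PYX x y * (s == f y)%:R * dmc_n PZX x z * (xh == h s z)%:R.

Definition P_Y (y : vec n Y) : R :=
  \sum_x \sum_s \sum_z \sum_xh Pjoint x y s z xh.
Definition P_YZ (y : vec n Y) (z : vec n Z) : R :=
  \sum_x \sum_s \sum_xh Pjoint x y s z xh.
Definition P_XYZ (x : vec n X) (y : vec n Y) (z : vec n Z) : R :=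
  \sum_s \sum_xh Pjoint x y s z xh.
Definition P_XYSZ (x : vec n X) (y : vec n Y) (s : 'I_L) (z : vec n Z) : R :=
  \sum_xh Pjoint x y s z xh.
Definition P_SZ (s : 'I_L) (z : vec n Z) : R :=
  \sum_x \sum_y \sum_xh Pjoint x y s z xh.
Definition P_S (s : 'I_L) : R :=
  \sum_x \sum_y \sum_z \sum_xh Pjoint x y s z xh.

Definition P_Z_Y (z : vec n Z) (y : vec n Y) : R := P_YZ y z / P_Y y.
Definition P_X_YZ (x : vec n X) (y : vec n Y) (z : vec n Z) : R :=
  P_XYZ x y z / P_YZ y z.
Definition P_XY_SZ (x : vec n X) (y : vec n Y) (s : 'I_L) (z : vec n Z) : R :=
  P_XYSZ x y s z / P_SZ s z.
Definition P_Z_S (z : vec n Z) (s : 'I_L) : R := P_SZ s z / P_S s.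

Definition PWT (w : 'I_M) (xs : {ffun 'I_M -> vec n X}) (ys : {ffun 'I_M -> vec n Y})
  (ss : {ffun 'I_M -> 'I_L}) (z : vec n Z) (xh : vec n Xh) : R :=
  M%:R^-1 *
  (\prod_m (iid_n PX (xs m) * dmc_n PYX (xs m) (ys m) * (ss m == f (ys m))%:R)) *
  dmc_n PZX (xs w) z * (xh == h (ss w) z)%:R.

Definition PWT_prob
  (E : 'I_M -> {ffun 'I_M -> vec n X} -> {ffun 'I_M -> vec n Y} ->
       {ffun 'I_M -> 'I_L} -> vec n Z -> vec n Xh -> bool) : R :=
  \sum_w \sum_xs \sum_ys \sum_ss \sum_z \sum_xh
    PWT w xs ys ss z xh * (E w xs ys ss z xh)%:R.

Definition Pc (g : {ffun 'I_M -> 'I_L} -> vec n Z -> 'I_M) (d : X -> Xh -> R)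
  (D : R) : R :=
  \sum_w \sum_(xs : {ffun 'I_M -> vec n X}) \sum_(ys : {ffun 'I_M -> vec n Y})
    \sum_(z : vec n Z)
    let ss := [ffun m => f (ys m)] in
    let wh := g ss z in
    M%:R^-1 * (\prod_m (iid_n PX (xs m) * dmc_n PYX (xs m) (ys m))) *
    dmc_n PZX (xs w) z *
    ((wh == w) && (distn d (xs w) (h (ss wh) z) <= D))%:R.

(* Auxiliary distributions Q and the events A_1(w), ..., A_7(w).
   Each condition (1/n) log (P/Q) >= -eta is written in the equivalent
   log-free form P >= exp(-n eta) Q. *)
Variables (QY : vec n Y -> R)
          (QZ_SY : 'I_L -> vec n Y -> vec n Z -> R)
          (QX_SYZ : 'I_L -> vec n Y -> vec n Z -> vec n X -> R)
          (QXY_SZXh : 'I_L -> vec n Z -> vec n Xh -> (vec n X * vec n Y) -> R)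
          (QYZ_S : 'I_L -> (vec n Y * vec n Z) -> R)
          (QZ : vec n Z -> R)
          (eta Rc Ri : R) (d : X -> Xh -> R) (D : R).

Definition A_all (w : 'I_M) (xs : {ffun 'I_M -> vec n X}) (ys : {ffun 'I_M -> vec n Y})
  (ss : {ffun 'I_M -> 'I_L}) (z : vec n Z) (xh : vec n Xh) : bool :=
  let x := xs w in let y := ys w in let s := ss w in
  let e := expR (- (n%:R * eta)) in
  [&& e * QY y <= P_Y y,
      e * QZ_SY s y z <= P_Z_Y z y,
      e * QX_SYZ s y z x <= P_X_YZ x y z,
      e * QXY_SZXh s z xh (x, y) <= P_XY_SZ x y s z,
      QYZ_S s (y, z) <= expR (n%:R * (Rc + eta)) * P_YZ y z,
      expR (n%:R * (Ri - eta)) * QZ z <= P_Z_S z s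
    & distn d x xh <= D].

End Model.

(* Main.v *)
Require Import Defs.
From mathcomp Require Import all_boot all_order all_algebra.
From mathcomp Require Import all_classical all_reals all_analysis.
From mathcomp Require Import ring lra.
Import Order.TTheory GRing.Theory Num.Theory.
Local Open Scope ring_scope.


Section Gen.
Context {R : realType}.

Lemma core1 (I A : finType) (w : I) (F : I -> A -> R) (G : A -> R) :
  \sum_(xs : {ffun I -> A}) (\prod_(m | m != w) F m (xs m)) * G (xs w) =
  (\prod_(m | m != w) \sum_a F m a) * \sum_a G a.
Proof.
pose H m a := if m == w then G a else F m a.
transitivity (\sum_(xs : {ffun I -> A}) \prod_m H m (xs m)).
  apply: eq_bigr => xs _; rewrite [RHS](bigD1 w) //= /H eqxx mulrC; congr (_ * _).
  by apply: eq_bigr => m /negbTE ->.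
rewrite -bigA_distr_bigA (bigD1 w) //= /H eqxx mulrC; congr (_ * _).
by apply: eq_bigr => m /negbTE ->.
Qed.

Lemma prod_ind_ffun (I A : finType) (a : I -> R) (ss : {ffun I -> A}) (c : I -> A) :
  \prod_m (a m * (ss m == c m)%:R) = (\prod_m a m) * (ss == finfun c)%:R.
Proof.
rewrite big_split /=; congr (_ * _).
case: eqP => [->|neq].
  by apply: big1 => m _; rewrite ffunE eqxx.
case/boolP: [exists m, ss m != c m] => [/existsP [m hm]|/existsPn H].
  by rewrite (bigD1 m) //= (negbTE hm) mul0r.
exfalso; apply: neq; apply/ffunP => m.
by rewrite ffunE; apply/eqP; move: (H m); rewrite negbK.
Qed.

Lemma sum_ind (A : finType) (a : A) (K : A -> R) :
  \sum_x (x == a)%:R * K x = K a.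
Proof.
rewrite (bigD1 a) //= eqxx mul1r big1 ?addr0 // => x /negbTE ->; by rewrite mul0r.
Qed.

Lemma sum_dmc (A B : finType) n (W : A -> B -> R) (a : vec n A) :
  is_cond_pmf W -> \sum_(b : vec n B) dmc_n W a b = 1.
Proof.
move=> HW; rewrite /dmc_n -(bigA_distr_bigA (fun i b => W (a i) b)).
by apply: big1 => i _; case: (HW (a i)).
Qed.

Lemma sum_iid (A : finType) n (P : A -> R) :
  is_pmf P -> \sum_(a : vec n A) iid_n P a = 1.
Proof.
move=> [_ HP]; rewrite /iid_n -(bigA_distr_bigA (fun (i : 'I_n) b => P b)).
by apply: big1 => i _.
Qed.

Lemma key (a b c : R) : 0 <= a -> a <= b -> 0 <= c ->
  a * (~~ (c <= a / b))%:R <= c * b.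
Proof.
move=> a0 ab c0; have [b0|bn0] := eqVneq b 0.
  have -> : a = 0 by apply/eqP; rewrite eq_le a0 -b0 ab.
  by rewrite b0 !mul0r mulr0.
have bp : 0 < b by rewrite lt_def bn0 (le_trans a0 ab).
case: (leP c (a / b)) => h /=; first (by rewrite mulr0n mulr0 mulr_ge0 // ltW).
by rewrite mulr1n mulr1 -ler_pdivrMr // ltW.
Qed.


Lemma sum_ind1 (A : finType) (a : A) : \sum_x (x == a)%:R = 1 :> R.
Proof.
rewrite (bigD1 a) //= eqxx big1 ?addr0 // => x /negbTE ->; by [].
Qed.

Lemma swap3 (A B C : finType) (F : A -> B -> C -> R) :
  \sum_a \sum_b \sum_c F a b c = \sum_c \sum_a \sum_b F a b c.
Proof.
under eq_bigr => a _ do rewrite exchange_big.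
by rewrite exchange_big.
Qed.


Lemma key0 (a c : R) : 0 <= c -> a * (~~ (c <= a))%:R <= c.
Proof.
move=> c0; case: (leP c a) => h /=; first by rewrite mulr0n mulr0.
by rewrite mulr1n mulr1 ltW.
Qed.

Lemma key5 (a q E : R) : 0 <= q -> 0 < E -> a * (~~ (q <= E * a))%:R <= q / E.
Proof.
move=> q0 E0; case: (leP q (E * a)) => h /=.
  by rewrite mulr0n mulr0 divr_ge0 // ltW.
by rewrite mulr1n mulr1 ler_pdivlMr // mulrC ltW.
Qed.


Lemma ind_or (a b c : bool) : (a -> b || c) -> (a%:R : R) <= b%:R + c%:R.
Proof.
case: a; case: b; case: c => //= H; rewrite ?mulr1n ?mulr0n; try lra.
Qed.


Lemma bool7 (gg a1 a2 a3 a4 a5 a6 a7 : bool) : gg && a7 ->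
  [&& a1, a2, a3, a4, a5, a6 & a7] ||
  (~~ a1 || (~~ a2 || (~~ a3 || (~~ a4 || (~~ a5 || (gg && ~~ a6)))))).
Proof. by case: gg; case: a1; case: a2; case: a3; case: a4; case: a5; case: a6; case: a7. Qed.

End Gen.


Section Main.
Variable R : realType.
Variables (X Y Z Xh : finType) (n M L : nat).
Variables (PX : X -> R) (PYX : X -> Y -> R) (PZX : X -> Z -> R).
Variables (f : vec n Y -> 'I_L) (h : 'I_L -> vec n Z -> vec n Xh).
Hypotheses (HPX : is_pmf PX) (HPYX : is_cond_pmf PYX) (HPZX : is_cond_pmf PZX).

Definition base (x : vec n X) (y : vec n Y) (s : 'I_L) : R :=
  iid_n PX x * dmc_n PYX x y * (s == f y)%:R.
Definition Sb (s : 'I_L) : R := \sum_x \sum_y base x y s.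

Lemma two (w : 'I_M) (ss : {ffun 'I_M -> 'I_L}) (G : vec n X -> vec n Y -> R) :
  \sum_(xs : {ffun 'I_M -> vec n X}) \sum_(ys : {ffun 'I_M -> vec n Y})
    (\prod_m base (xs m) (ys m) (ss m)) * G (xs w) (ys w) =
  (\prod_(m | m != w) Sb (ss m)) * \sum_x \sum_y base x y (ss w) * G x y.
Proof.
transitivity (\sum_(xs : {ffun 'I_M -> vec n X})
   (\prod_(m | m != w) (\sum_b base (xs m) b (ss m))) *
     \sum_b base (xs w) b (ss w) * G (xs w) b).
  apply: eq_bigr => xs _.
  have H := @core1 R _ _ w (fun m b => base (xs m) b (ss m)) (fun b => base (xs w) b (ss w) * G (xs w) b).
  cbv beta in H; rewrite -H; apply: eq_bigr => ys _.
  by rewrite (bigD1 w) //= mulrAC mulrC mulrA.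
have H := @core1 R _ _ w (fun m a => \sum_b base a b (ss m)) (fun a => \sum_b base a b (ss w) * G a b).
by cbv beta in H; rewrite H.
Qed.


Lemma pj_base x y s z xh :
  Pjoint PX PYX PZX f h x y s z xh = base x y s * dmc_n PZX x z * (xh == h s z)%:R.
Proof. by []. Qed.

Lemma Sb_sum : \sum_s Sb s = 1.
Proof.
rewrite /Sb -swap3.
transitivity (\sum_(x : vec n X) iid_n PX x); last exact: sum_iid.
apply: eq_bigr => x _.
transitivity (\sum_(y : vec n Y) iid_n PX x * dmc_n PYX x y); last first.
  by rewrite -mulr_sumr sum_dmc ?mulr1.
apply: eq_bigr => y _.
by rewrite /base -mulr_sumr sum_ind1 mulr1.
Qed.

Lemma Sb_PS s : Sb s = P_S PX PYX PZX f h s.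
Proof.
rewrite /Sb /P_S; apply: eq_bigr => x _; apply: eq_bigr => y _.
under eq_bigr => z _ do under eq_bigr => xh _ do rewrite pj_base.
transitivity (\sum_(z : vec n Z) base x y s * dmc_n PZX x z).
  by rewrite -mulr_sumr sum_dmc ?mulr1.
apply: eq_bigr => z _.
by rewrite -mulr_sumr sum_ind1 mulr1.
Qed.

Lemma PSZ_base s z : P_SZ PX PYX PZX f h s z = \sum_x \sum_y base x y s * dmc_n PZX x z.
Proof.
rewrite /P_SZ; apply: eq_bigr => x _; apply: eq_bigr => y _.
under eq_bigr => xh _ do rewrite pj_base.
by rewrite -mulr_sumr sum_ind1 mulr1.
Qed.

Definition J (E : vec n X -> vec n Y -> 'I_L -> vec n Z -> vec n Xh -> bool) : R :=
  \sum_x \sum_y \sum_s \sum_z \sum_xh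
     Pjoint PX PYX PZX f h x y s z xh * (E x y s z xh)%:R.

Lemma marg (E : vec n X -> vec n Y -> 'I_L -> vec n Z -> vec n Xh -> bool) :
  (0 < M)%N ->
  PWT_prob (M:=M) PX PYX PZX f h (fun w xs ys ss z xh => E (xs w) (ys w) (ss w) z xh) = J E.
Proof.
move=> M0; rewrite /PWT_prob.
pose G x y s := \sum_z \sum_xh dmc_n PZX x z * (xh == h s z)%:R * (E x y s z xh)%:R.
transitivity (\sum_(w : 'I_M) M%:R^-1 * J E); last first.
  rewrite -mulr_sumr sumr_const card_ord -[J E *+ M]mulr_natl.
  rewrite mulrA mulVf ?mul1r //.
  by rewrite pnatr_eq0 -lt0n.
apply: eq_bigr => w _.
transitivity (\sum_(xs : {ffun 'I_M -> vec n X}) \sum_(ys : {ffun 'I_M -> vec n Y})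
   \sum_(ss : {ffun 'I_M -> 'I_L})
   M%:R^-1 * ((\prod_m base (xs m) (ys m) (ss m)) * G (xs w) (ys w) (ss w))).
  apply: eq_bigr => xs _; apply: eq_bigr => ys _; apply: eq_bigr => ss _.
  rewrite /G !mulr_sumr; apply: eq_bigr => z _; rewrite !mulr_sumr; apply: eq_bigr => xh _.
  by rewrite /PWT /base !mulrA.
rewrite swap3.
under eq_bigr => ss _ do under eq_bigr => xs _ do rewrite -mulr_sumr.
under eq_bigr => ss _ do rewrite -mulr_sumr.
rewrite -mulr_sumr; congr (_ * _).
under eq_bigr => ss _ do rewrite (two w ss (fun x y => G x y (ss w))).
have H := @core1 R _ _ w (fun m s => Sb s) (fun s => \sum_x \sum_y base x y s * G x y s).
cbv beta in H; rewrite H Sb_sum big1 ?mul1r //.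
rewrite -swap3; apply: eq_bigr => x _; apply: eq_bigr => y _; apply: eq_bigr => s _.
rewrite /G mulr_sumr; apply: eq_bigr => z _; rewrite mulr_sumr; apply: eq_bigr => xh _.
by rewrite pj_base !mulrA.
Qed.


Lemma margS (E6 : 'I_M -> {ffun 'I_M -> 'I_L} -> vec n Z -> bool) :
  PWT_prob (M:=M) PX PYX PZX f h (fun w xs ys ss z xh => E6 w ss z) =
  \sum_w \sum_(ss : {ffun 'I_M -> 'I_L}) M%:R^-1 * ((\prod_(m | m != w) Sb (ss m)) *
     \sum_z P_SZ PX PYX PZX f h (ss w) z * (E6 w ss z)%:R).
Proof.
rewrite /PWT_prob; apply: eq_bigr => w _.
pose G ss x := \sum_z dmc_n PZX x z * (E6 w ss z)%:R.
transitivity (\sum_(xs : {ffun 'I_M -> vec n X}) \sum_(ys : {ffun 'I_M -> vec n Y})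
   \sum_(ss : {ffun 'I_M -> 'I_L})
   M%:R^-1 * ((\prod_m base (xs m) (ys m) (ss m)) * G ss (xs w))).
  apply: eq_bigr => xs _; apply: eq_bigr => ys _; apply: eq_bigr => ss _.
  rewrite /G !mulr_sumr; apply: eq_bigr => z _.
  transitivity (\sum_(xh : vec n Xh) (xh == h (ss w) z)%:R *
     (M%:R^-1 * (\prod_m base (xs m) (ys m) (ss m) * (dmc_n PZX (xs w) z * (E6 w ss z)%:R)))).
    by apply: eq_bigr => xh _; rewrite /PWT /base; ring.
  by rewrite -mulr_suml sum_ind1 mul1r.
rewrite swap3; apply: eq_bigr => ss _.
transitivity (M%:R^-1 * \sum_(xs : {ffun 'I_M -> vec n X}) \sum_(ys : {ffun 'I_M -> vec n Y})
   (\prod_m base (xs m) (ys m) (ss m)) * G ss (xs w)).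
  by rewrite mulr_sumr; apply: eq_bigr => xs _; rewrite mulr_sumr.
congr (_ * _).
rewrite (two w ss (fun x y => G ss x)); congr (_ * _).
rewrite /G.
transitivity (\sum_x \sum_y \sum_z base x y (ss w) * dmc_n PZX x z * (E6 w ss z)%:R).
  apply: eq_bigr => x _; apply: eq_bigr => y _; rewrite mulr_sumr.
  by apply: eq_bigr => z _; rewrite mulrA.
rewrite swap3; apply: eq_bigr => z _; rewrite PSZ_base !mulr_suml.
by apply: eq_bigr => x _; rewrite !mulr_suml.
Qed.


Lemma iid_ge0 (x : vec n X) : 0 <= iid_n PX x.
Proof. by apply: prodr_ge0 => i _; case: HPX. Qed.
Lemma dmcY_ge0 (x : vec n X) (y : vec n Y) : 0 <= dmc_n PYX x y.
Proof. by apply: prodr_ge0 => i _; case: (HPYX (x i)). Qed.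
Lemma dmcZ_ge0 (x : vec n X) (z : vec n Z) : 0 <= dmc_n PZX x z.
Proof. by apply: prodr_ge0 => i _; case: (HPZX (x i)). Qed.
Lemma base_ge0 x y s : 0 <= base x y s.
Proof. by rewrite /base !mulr_ge0 ?iid_ge0 ?dmcY_ge0 ?ler0n. Qed.
Lemma pj_ge0 x y s z xh : 0 <= Pjoint PX PYX PZX f h x y s z xh.
Proof.
rewrite pj_base; apply: mulr_ge0; last exact: ler0n.
apply: mulr_ge0; [exact: base_ge0|exact: dmcZ_ge0].
Qed.
Lemma Sb_ge0 s : 0 <= Sb s.
Proof. rewrite /Sb; apply: sumr_ge0 => x _; apply: sumr_ge0 => y _; exact: base_ge0. Qed.
Lemma PSZ_ge0 s z : 0 <= P_SZ PX PYX PZX f h s z.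
Proof. rewrite /P_SZ; apply: sumr_ge0 => x _; apply: sumr_ge0 => y _; apply: sumr_ge0 => xh _; exact: pj_ge0. Qed.
Lemma PS_sum s : P_S PX PYX PZX f h s = \sum_z P_SZ PX PYX PZX f h s z.
Proof. by rewrite /P_S /P_SZ swap3. Qed.
Lemma le_sum1 (T : finType) (F : T -> R) t : (forall u, 0 <= F u) -> F t <= \sum_u F u.
Proof.
move=> H; rewrite (bigD1 t) //= lerDl; by apply: sumr_ge0 => u _.
Qed.
Lemma PSZ_le s z : P_SZ PX PYX PZX f h s z <= P_S PX PYX PZX f h s.
Proof. rewrite PS_sum; apply: le_sum1 => u; exact: PSZ_ge0. Qed.

Lemma bound6 (g : {ffun 'I_M -> 'I_L} -> vec n Z -> 'I_M) (c : vec n Z -> R) :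
  (forall z, 0 <= c z) ->
  PWT_prob (M:=M) PX PYX PZX f h
    (fun w xs ys ss z xh => (g ss z == w) && ~~ (c z <= P_Z_S PX PYX PZX f h z (ss w)))
  <= M%:R^-1 * \sum_z c z.
Proof.
move=> c0.
rewrite (margS (fun w ss z => (g ss z == w) && ~~ (c z <= P_Z_S PX PYX PZX f h z (ss w)))).
apply: (@le_trans _ _ (\sum_w \sum_(ss : {ffun 'I_M -> 'I_L}) \sum_z
   M%:R^-1 * (c z * ((\prod_m Sb (ss m)) * (g ss z == w)%:R)))).
  apply: ler_sum => w _; apply: ler_sum => ss _.
  rewrite mulr_sumr mulr_sumr; apply: ler_sum => z _.
  apply: ler_wpM2l; first by rewrite invr_ge0 ler0n.
  have p0 : 0 <= \prod_(m | m != w) Sb (ss m) by apply: prodr_ge0 => m _; apply: Sb_ge0.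
  case: (g ss z == w) => /=; last by rewrite mulr0n !mulr0.
  rewrite mulr1n mulr1 [\prod_m Sb (ss m)](bigD1 w) //=.
  have -> : c z * (Sb (ss w) * \prod_(m | m != w) Sb (ss m)) =
     \prod_(m | m != w) Sb (ss m) * (c z * Sb (ss w)) by ring.
  apply: ler_wpM2l => //.
  rewrite Sb_PS /P_Z_S; apply: key; [exact: PSZ_ge0|exact: PSZ_le|exact: c0].
rewrite le_eqVlt; apply/orP; left; apply/eqP.
rewrite exchange_big /=.
under eq_bigr => ss _ do rewrite exchange_big /=.
transitivity (\sum_(ss : {ffun 'I_M -> 'I_L}) \sum_z M%:R^-1 * (c z * \prod_m Sb (ss m))).
  apply: eq_bigr => ss _; apply: eq_bigr => z _.
  rewrite (bigD1 (g ss z)) //= eqxx mulr1 [X in _ + X]big1 ?addr0 // => w.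
  by move=> /negbTE hw; rewrite eq_sym hw mulr0n !mulr0.
rewrite exchange_big /= mulr_sumr; apply: eq_bigr => z _.
rewrite -mulr_sumr -mulr_sumr -(bigA_distr_bigA (fun (m : 'I_M) s => Sb s)) /=.
rewrite big1 ?mulr1 // => m _; exact: Sb_sum.
Qed.


Definition Pr (x : vec n X) (y : vec n Y) (z : vec n Z) : R :=
  iid_n PX x * dmc_n PYX x y * dmc_n PZX x z.

Lemma Pr_ge0 x y z : 0 <= Pr x y z.
Proof. by rewrite /Pr !mulr_ge0 ?iid_ge0 ?dmcY_ge0 ?dmcZ_ge0. Qed.

Lemma pjR x y s z xh : Pjoint PX PYX PZX f h x y s z xh =
  (s == f y)%:R * ((xh == h s z)%:R * Pr x y z).
Proof. rewrite /Pjoint /Pr; ring. Qed.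

Lemma sum_ind_r (A : finType) (a : A) (c : R) : \sum_x (x == a)%:R * c = c.
Proof. by rewrite -mulr_suml sum_ind1 mul1r. Qed.

Lemma PY_R y : P_Y PX PYX PZX f h y = \sum_x \sum_z Pr x y z.
Proof.
rewrite /P_Y; apply: eq_bigr => x _.
under eq_bigr => s _ do under eq_bigr => z _ do under eq_bigr => xh _ do rewrite pjR.
under eq_bigr => s _ do under eq_bigr => z _ do rewrite -mulr_sumr.
under eq_bigr => s _ do rewrite -mulr_sumr.
rewrite sum_ind; apply: eq_bigr => z _; exact: sum_ind_r.
Qed.

Lemma PYZ_R y z : P_YZ PX PYX PZX f h y z = \sum_x Pr x y z.
Proof.
rewrite /P_YZ; apply: eq_bigr => x _.
under eq_bigr => s _ do under eq_bigr => xh _ do rewrite pjR.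
under eq_bigr => s _ do rewrite -mulr_sumr.
by rewrite sum_ind sum_ind_r.
Qed.

Lemma PXYZ_R x y z : P_XYZ PX PYX PZX f h x y z = Pr x y z.
Proof.
rewrite /P_XYZ.
under eq_bigr => s _ do under eq_bigr => xh _ do rewrite pjR.
under eq_bigr => s _ do rewrite -mulr_sumr.
by rewrite sum_ind sum_ind_r.
Qed.

Lemma PXYSZ_R x y s z : P_XYSZ PX PYX PZX f h x y s z = (s == f y)%:R * Pr x y z.
Proof.
rewrite /P_XYSZ.
under eq_bigr => xh _ do rewrite pjR.
by rewrite -mulr_sumr sum_ind_r.
Qed.

Lemma PSZ_R s z : P_SZ PX PYX PZX f h s z = \sum_x \sum_y (s == f y)%:R * Pr x y z.
Proof.
rewrite /P_SZ; apply: eq_bigr => x _; apply: eq_bigr => y _.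
under eq_bigr => xh _ do rewrite pjR.
by rewrite -mulr_sumr sum_ind_r.
Qed.

Lemma Jred E : J E = \sum_x \sum_y \sum_z Pr x y z * (E x y (f y) z (h (f y) z))%:R.
Proof.
rewrite /J; apply: eq_bigr => x _; apply: eq_bigr => y _.
under eq_bigr => s _ do under eq_bigr => z _ do under eq_bigr => xh _ do rewrite pjR -mulrA.
under eq_bigr => s _ do under eq_bigr => z _ do rewrite -mulr_sumr.
under eq_bigr => s _ do rewrite -mulr_sumr.
rewrite sum_ind; apply: eq_bigr => z _.
under eq_bigr => xh _ do rewrite -mulrA.
by rewrite sum_ind.
Qed.

Lemma Pr_total : \sum_x \sum_y \sum_z Pr x y z = 1.
Proof.
rewrite -(sum_iid _ n _ HPX); apply: eq_bigr => x _.
transitivity (\sum_(y : vec n Y) iid_n PX x * dmc_n PYX x y).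
  apply: eq_bigr => y _; by rewrite /Pr -mulr_sumr sum_dmc ?mulr1.
by rewrite -mulr_sumr sum_dmc ?mulr1.
Qed.


Lemma PYZ_ge0 y z : 0 <= P_YZ PX PYX PZX f h y z.
Proof. rewrite PYZ_R; apply: sumr_ge0 => x _; exact: Pr_ge0. Qed.

Lemma PY_sum y : P_Y PX PYX PZX f h y = \sum_z P_YZ PX PYX PZX f h y z.
Proof. rewrite PY_R exchange_big; apply: eq_bigr => z _; by rewrite PYZ_R. Qed.

Lemma PYZ_total : \sum_y \sum_z P_YZ PX PYX PZX f h y z = 1.
Proof.
rewrite -Pr_total.
under eq_bigr => y _ do under eq_bigr => z _ do rewrite PYZ_R.
by rewrite (swap3 _ _ _ (fun (y : vec n Y) (z : vec n Z) (x : vec n X) => Pr x y z)).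
Qed.

Lemma PY_total : \sum_y P_Y PX PYX PZX f h y = 1.
Proof. rewrite -PYZ_total; apply: eq_bigr => y _; exact: PY_sum. Qed.

Lemma PSZ_total : \sum_z \sum_s P_SZ PX PYX PZX f h s z = 1.
Proof.
rewrite -Pr_total.
transitivity (\sum_z \sum_x \sum_y Pr x y z); last by rewrite (swap3 _ _ _ (fun x y z => Pr x y z)).
apply: eq_bigr => z _.
under eq_bigr => s _ do rewrite PSZ_R.
rewrite (esym (swap3 _ _ _ (fun x y s => (s == f y)%:R * Pr x y z))).
apply: eq_bigr => x _; apply: eq_bigr => y _; exact: sum_ind_r.
Qed.


Lemma bound1 (QY : vec n Y -> R) (e : R) : is_pmf QY -> 0 <= e ->
  J (fun x y s z xh => ~~ (e * QY y <= P_Y PX PYX PZX f h y)) <= e.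
Proof.
move=> [Q0 Q1] e0; rewrite Jred exchange_big /=.
apply: (@le_trans _ _ (\sum_y e * QY y)); last by rewrite -mulr_sumr Q1 mulr1.
apply: ler_sum => y _.
rewrite (_ : \sum_x _ = P_Y PX PYX PZX f h y * (~~ (e * QY y <= P_Y PX PYX PZX f h y))%:R).
  by apply: key0; rewrite mulr_ge0.
by rewrite PY_R !mulr_suml; apply: eq_bigr => x _; rewrite mulr_suml.
Qed.


Lemma PYZ_le y z : P_YZ PX PYX PZX f h y z <= P_Y PX PYX PZX f h y.
Proof. rewrite PY_sum; apply: le_sum1 => u; exact: PYZ_ge0. Qed.

Lemma bound2 (Q : 'I_L -> vec n Y -> vec n Z -> R) (e : R) :
  (forall s, is_cond_pmf (Q s)) -> 0 <= e ->
  J (fun x y s z xh => ~~ (e * Q s y z <= P_Z_Y PX PYX PZX f h z y)) <= e.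
Proof.
move=> HQ e0; rewrite Jred exchange_big /=.
apply: (@le_trans _ _ (\sum_y e * P_Y PX PYX PZX f h y)); last by rewrite -mulr_sumr PY_total mulr1.
apply: ler_sum => y _.
rewrite exchange_big /=.
apply: (@le_trans _ _ (\sum_z e * Q (f y) y z * P_Y PX PYX PZX f h y)); last first.
  rewrite -mulr_suml -mulr_sumr; case: (HQ (f y) y) => _ ->; by rewrite mulr1.
apply: ler_sum => z _.
rewrite -mulr_suml -PYZ_R /P_Z_Y; apply: key; [exact: PYZ_ge0|exact: PYZ_le|].
by rewrite mulr_ge0 //; case: (HQ (f y) y).
Qed.

Lemma bound3 (Q : 'I_L -> vec n Y -> vec n Z -> vec n X -> R) (e : R) :
  (forall s y, is_cond_pmf (Q s y)) -> 0 <= e ->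
  J (fun x y s z xh => ~~ (e * Q s y z x <= P_X_YZ PX PYX PZX f h x y z)) <= e.
Proof.
move=> HQ e0; rewrite Jred.
apply: (@le_trans _ _ (\sum_x \sum_y \sum_z e * Q (f y) y z x * P_YZ PX PYX PZX f h y z)).
  apply: ler_sum => x _; apply: ler_sum => y _; apply: ler_sum => z _.
  rewrite /P_X_YZ PXYZ_R; apply: key; [exact: Pr_ge0| |].
    rewrite PYZ_R; apply: (le_sum1 _ (fun u => Pr u y z)) => u; exact: Pr_ge0.
  by rewrite mulr_ge0 //; case: (HQ (f y) y z).
rewrite (esym (swap3 _ _ _ (fun y z x => e * Q (f y) y z x * P_YZ PX PYX PZX f h y z))).
apply: (@le_trans _ _ (\sum_y \sum_z e * P_YZ PX PYX PZX f h y z)); last first.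
  rewrite (_ : \sum_y \sum_z _ = e * 1); first by rewrite mulr1.
  by rewrite -PYZ_total mulr_sumr; apply: eq_bigr => y _; rewrite mulr_sumr.
apply: ler_sum => y _; apply: ler_sum => z _.
rewrite -mulr_suml -mulr_sumr; case: (HQ (f y) y z) => _ ->; by rewrite mulr1.
Qed.


Lemma bound4 (Q : 'I_L -> vec n Z -> vec n Xh -> (vec n X * vec n Y) -> R) (e : R) :
  (forall s z, is_cond_pmf (Q s z)) -> 0 <= e ->
  J (fun x y s z xh => ~~ (e * Q s z xh (x, y) <= P_XY_SZ PX PYX PZX f h x y s z)) <= e.
Proof.
move=> HQ e0; rewrite Jred.
pose T s z x y := e * Q s z (h s z) (x, y) * P_SZ PX PYX PZX f h s z.
have T0 s z x y : 0 <= T s z x y.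
  by rewrite /T !mulr_ge0 ?PSZ_ge0 //; case: (HQ s z (h s z)).
apply: (@le_trans _ _ (\sum_x \sum_y \sum_z \sum_s T s z x y)).
  apply: ler_sum => x _; apply: ler_sum => y _; apply: ler_sum => z _.
  apply: (@le_trans _ _ (T (f y) z x y)); last by apply: (le_sum1 _ (fun s => T s z x y)).

  rewrite /T /P_XY_SZ PXYSZ_R eqxx mul1r; apply: key; [exact: Pr_ge0| |].
    rewrite PSZ_R.
    apply: le_trans (le_sum1 _ (fun x' => \sum_y' (f y == f y')%:R * Pr x' y' z) x _).
      apply: le_trans (le_sum1 _ (fun y' => (f y == f y')%:R * Pr x y' z) y _).
        by rewrite eqxx mul1r.
      by move=> u; rewrite mulr_ge0 ?Pr_ge0.
    by move=> u; apply: sumr_ge0 => v _; rewrite mulr_ge0 ?Pr_ge0.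
  by rewrite mulr_ge0 //; case: (HQ (f y) z (h (f y) z)).
rewrite (swap3 _ _ _ (fun x y z => \sum_s T s z x y)).
under eq_bigr => z _ do rewrite (swap3 _ _ _ (fun x y s => T s z x y)).
rewrite le_eqVlt; apply/orP; left; apply/eqP.
transitivity (\sum_z \sum_s e * P_SZ PX PYX PZX f h s z); last first.
  rewrite -[RHS]mulr1 -PSZ_total mulr_sumr; apply: eq_bigr => z _; by rewrite mulr_sumr.
apply: eq_bigr => z _; apply: eq_bigr => s _.
rewrite /T.
transitivity (\sum_x \sum_y (e * P_SZ PX PYX PZX f h s z) * Q s z (h s z) (x, y)).
  apply: eq_bigr => x _; apply: eq_bigr => y _; ring.
under eq_bigr => x _ do rewrite -mulr_sumr.
rewrite -mulr_sumr pair_bigA /=.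
rewrite (_ : \sum_(p : _ * _) Q s z (h s z) (p.1, p.2) = 1) ?mulr1 //.
by case: (HQ s z (h s z)) => _ <-; apply: eq_bigr => -[a b] _.
Qed.


Lemma bound5 (Q : 'I_L -> (vec n Y * vec n Z) -> R) (E : R) :
  is_cond_pmf Q -> 0 < E ->
  J (fun x y s z xh => ~~ (Q s (y, z) <= E * P_YZ PX PYX PZX f h y z)) <= L%:R / E.
Proof.
move=> HQ E0; rewrite Jred exchange_big /=.
apply: (@le_trans _ _ (\sum_y \sum_z (\sum_s Q s (y, z)) / E)).
  apply: ler_sum => y _; rewrite exchange_big /=; apply: ler_sum => z _.
  rewrite -mulr_suml -PYZ_R.
  apply: (@le_trans _ _ (Q (f y) (y, z) / E)).
    by apply: key5 => //; case: (HQ (f y)).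
  apply: ler_wpM2r; first by rewrite invr_ge0 ltW.
  by apply: (le_sum1 _ (fun s => Q s (y, z))) => u; case: (HQ u).
rewrite le_eqVlt; apply/orP; left; apply/eqP.
transitivity ((\sum_y \sum_z \sum_s Q s (y, z)) / E).
  by rewrite mulr_suml; apply: eq_bigr => y _; rewrite mulr_suml.
rewrite (swap3 _ _ _ (fun y z s => Q s (y, z))); congr (_ / _).
transitivity (\sum_(s : 'I_L) (1 : R)); last by rewrite sumr_const card_ord.
apply: eq_bigr => s _; rewrite pair_bigA /=.
by case: (HQ s) => _ <-; apply: eq_bigr => -[a b] _.
Qed.


Lemma PWT_ge0 w xs ys ss z xh : 0 <= PWT (M:=M) PX PYX PZX f h w xs ys ss z xh.
Proof.
rewrite /PWT; apply: mulr_ge0; last exact: ler0n.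
apply: mulr_ge0; last exact: dmcZ_ge0.
apply: mulr_ge0; first by rewrite invr_ge0 ler0n.
apply: prodr_ge0 => m _; exact: base_ge0.
Qed.

Lemma prob_union (E E1 E2 : 'I_M -> {ffun 'I_M -> vec n X} -> {ffun 'I_M -> vec n Y} ->
   {ffun 'I_M -> 'I_L} -> vec n Z -> vec n Xh -> bool) :
  (forall w xs ys ss z xh, E w xs ys ss z xh -> E1 w xs ys ss z xh || E2 w xs ys ss z xh) ->
  PWT_prob (M:=M) PX PYX PZX f h E <=
  PWT_prob (M:=M) PX PYX PZX f h E1 + PWT_prob (M:=M) PX PYX PZX f h E2.
Proof.
move=> HE; rewrite /PWT_prob.
rewrite -big_split; apply: ler_sum => w _.
rewrite -big_split; apply: ler_sum => xs _.
rewrite -big_split; apply: ler_sum => ys _.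
rewrite -big_split; apply: ler_sum => ss _.
rewrite -big_split; apply: ler_sum => z _.
rewrite -big_split; apply: ler_sum => xh _.
set pw := PWT _ _ _ _ _ _ _ _ _ _ _.
apply: (@le_trans _ _ (pw * (E1 w xs ys ss z xh)%:R + pw * (E2 w xs ys ss z xh)%:R)); last exact: lexx.
rewrite -mulrDr; apply: ler_wpM2l; first exact: PWT_ge0.
exact: ind_or (HE w xs ys ss z xh).
Qed.

Lemma step1 (g : {ffun 'I_M -> 'I_L} -> vec n Z -> 'I_M) (d : X -> Xh -> R) (D : R) :
  Pc PX PYX PZX f h g d D =
  PWT_prob (M:=M) PX PYX PZX f h
    (fun w xs ys ss z xh => (g ss z == w) && (distn d (xs w) xh <= D)).
Proof.
rewrite /Pc /PWT_prob; apply: eq_bigr => w _; apply: eq_bigr => xs _; apply: eq_bigr => ys _.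
pose s0 := [ffun m => f (ys m)].
pose P := \prod_m (iid_n PX (xs m) * dmc_n PYX (xs m) (ys m)).
transitivity (\sum_(ss : {ffun 'I_M -> 'I_L}) (ss == s0)%:R * \sum_z \sum_(xh : vec n Xh)
   (xh == h (ss w) z)%:R * (M%:R^-1 * P * dmc_n PZX (xs w) z *
      ((g ss z == w) && (distn d (xs w) xh <= D))%:R)); last first.
  apply: eq_bigr => ss _; rewrite mulr_sumr; apply: eq_bigr => z _.
  rewrite mulr_sumr; apply: eq_bigr => xh _.
  rewrite /PWT (prod_ind_ffun _ _ (fun m => iid_n PX (xs m) * dmc_n PYX (xs m) (ys m)) ss
     (fun m => f (ys m))) -/P; ring.
rewrite sum_ind; apply: eq_bigr => z _; rewrite sum_ind /=.
case: (eqVneq (g s0 z) w) => [<-|ne] //=.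
Qed.


Lemma main_sec (g : {ffun 'I_M -> 'I_L} -> vec n Z -> 'I_M) (d : X -> Xh -> R)
  (D Rc Ri eta : R)
  (QY : vec n Y -> R)
  (QZ_SY : 'I_L -> vec n Y -> vec n Z -> R)
  (QX_SYZ : 'I_L -> vec n Y -> vec n Z -> vec n X -> R)
  (QXY_SZXh : 'I_L -> vec n Z -> vec n Xh -> (vec n X * vec n Y) -> R)
  (QYZ_S : 'I_L -> (vec n Y * vec n Z) -> R)
  (QZ : vec n Z -> R) :
  (0 < n)%N -> (0 < M)%N -> (0 < L)%N ->
  is_pmf QY ->
  (forall s, is_cond_pmf (QZ_SY s)) ->
  (forall s y, is_cond_pmf (QX_SYZ s y)) ->
  (forall s z, is_cond_pmf (QXY_SZXh s z)) ->
  is_cond_pmf QYZ_S ->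
  is_pmf QZ ->
  0 < eta ->
  n%:R^-1 * ln (L%:R : R) <= Rc ->
  n%:R^-1 * ln (M%:R : R) >= Ri ->
  Pc PX PYX PZX f h g d D <=
    PWT_prob (M:=M) PX PYX PZX f h
      (A_all (M:=M) PX PYX PZX f h QY QZ_SY QX_SYZ QXY_SZXh QYZ_S QZ eta Rc Ri d D)
    + 6 * expR (- (n%:R * eta)).
Proof.
move=> n0 M0 L0 HQY HQ2 HQ3 HQ4 HQ5 HQZ eta0 HL HM.
set e := expR (- (n%:R * eta)).
have e0 : 0 <= e by rewrite ltW ?expR_gt0.
pose b1 := fun (x : vec n X) (y : vec n Y) (s : 'I_L) (z : vec n Z) (xh : vec n Xh) =>
  ~~ (e * QY y <= P_Y PX PYX PZX f h y).
pose b2 := fun (x : vec n X) (y : vec n Y) (s : 'I_L) (z : vec n Z) (xh : vec n Xh) =>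
  ~~ (e * QZ_SY s y z <= P_Z_Y PX PYX PZX f h z y).
pose b3 := fun (x : vec n X) (y : vec n Y) (s : 'I_L) (z : vec n Z) (xh : vec n Xh) =>
  ~~ (e * QX_SYZ s y z x <= P_X_YZ PX PYX PZX f h x y z).
pose b4 := fun (x : vec n X) (y : vec n Y) (s : 'I_L) (z : vec n Z) (xh : vec n Xh) =>
  ~~ (e * QXY_SZXh s z xh (x, y) <= P_XY_SZ PX PYX PZX f h x y s z).
pose b5 := fun (x : vec n X) (y : vec n Y) (s : 'I_L) (z : vec n Z) (xh : vec n Xh) =>
  ~~ (QYZ_S s (y, z) <= expR (n%:R * (Rc + eta)) * P_YZ PX PYX PZX f h y z).
pose c := fun z => expR (n%:R * (Ri - eta)) * QZ z.
pose T := {ffun 'I_M -> vec n X}.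
pose E1 := fun w (xs : T) (ys : {ffun 'I_M -> vec n Y}) (ss : {ffun 'I_M -> 'I_L}) z xh =>
   b1 (xs w) (ys w) (ss w) z xh.
pose E2 := fun w (xs : T) (ys : {ffun 'I_M -> vec n Y}) (ss : {ffun 'I_M -> 'I_L}) z xh =>
   b2 (xs w) (ys w) (ss w) z xh.
pose E3 := fun w (xs : T) (ys : {ffun 'I_M -> vec n Y}) (ss : {ffun 'I_M -> 'I_L}) z xh =>
   b3 (xs w) (ys w) (ss w) z xh.
pose E4 := fun w (xs : T) (ys : {ffun 'I_M -> vec n Y}) (ss : {ffun 'I_M -> 'I_L}) z xh =>
   b4 (xs w) (ys w) (ss w) z xh.
pose E5 := fun w (xs : T) (ys : {ffun 'I_M -> vec n Y}) (ss : {ffun 'I_M -> 'I_L}) z xh =>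
   b5 (xs w) (ys w) (ss w) z xh.
pose E6 := fun (w : 'I_M) (xs : T) (ys : {ffun 'I_M -> vec n Y}) (ss : {ffun 'I_M -> 'I_L})
   (z : vec n Z) (xh : vec n Xh) =>
   (g ss z == w) && ~~ (c z <= P_Z_S PX PYX PZX f h z (ss w)).
pose Or := fun (F G : 'I_M -> T -> {ffun 'I_M -> vec n Y} -> {ffun 'I_M -> 'I_L} ->
    vec n Z -> vec n Xh -> bool) w xs ys ss z xh =>
  F w xs ys ss z xh || G w xs ys ss z xh.
pose PP := PWT_prob (M:=M) PX PYX PZX f h.
have HU F G : PP (Or F G) <= PP F + PP G.
  by apply: prob_union => w xs ys ss z xh.
rewrite step1.
apply: le_trans (prob_union _ _ (Or E1 (Or E2 (Or E3 (Or E4 (Or E5 E6))))) _) _.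
  move=> w xs ys ss z xh H; exact: bool7 H.
rewrite lerD2l.
have P1 : PP E1 <= e.
  have -> : PP E1 = J b1 by exact: marg.
  exact: bound1.
have P2 : PP E2 <= e.
  have -> : PP E2 = J b2 by exact: marg.
  exact: bound2.
have P3 : PP E3 <= e.
  have -> : PP E3 = J b3 by exact: marg.
  exact: bound3.
have P4 : PP E4 <= e.
  have -> : PP E4 = J b4 by exact: marg.
  exact: bound4.
have P5 : PP E5 <= e.
  have -> : PP E5 = J b5 by exact: marg.
  apply: le_trans (bound5 _ _ HQ5 (expR_gt0 _)) _.
  have HL' : ln (L%:R : R) <= n%:R * Rc.
    by rewrite -ler_pdivrMl ?ltr0n // mulrC.
  have HL2 : (L%:R : R) <= expR (n%:R * Rc).
    by rewrite -[X in X <= _]lnK ?posrE ?ltr0n // ler_expR.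
  rewrite /e mulrDr expRD expRN.
  have a0 := expR_gt0 (n%:R * Rc); have b0 := expR_gt0 (n%:R * eta).
  rewrite invfM mulrA -[X in _ <= X]mul1r.
  apply: ler_wpM2r; first by rewrite invr_ge0 ltW.
  by rewrite ler_pdivrMr // mul1r.
have P6 : PP E6 <= e.
  apply: le_trans (bound6 g c _) _.
    move=> z; apply: mulr_ge0; [exact: ltW (expR_gt0 _)|by case: HQZ].
  have HM' : n%:R * Ri <= ln (M%:R : R).
    by rewrite -ler_pdivlMl ?ltr0n // mulrC.
  have HM2 : expR (n%:R * Ri) <= (M%:R : R).
    by rewrite -[X in _ <= X]lnK ?posrE ?ltr0n // ler_expR.
  rewrite /c -mulr_sumr; case: HQZ => _ ->; rewrite mulr1.
  rewrite mulrBr expRD /e -mulNr mulrA.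
  have m0 : (0 : R) < M%:R by rewrite ltr0n.
  rewrite -[X in _ <= X]mul1r.
  apply: ler_wpM2r; first by rewrite ltW ?expR_gt0.
  by rewrite mulrC ler_pdivrMr // mul1r.
apply: le_trans (HU _ _) _.
have -> : 6 * e = e + (e + (e + (e + (e + e)))) by ring.
apply: lerD => //; apply: le_trans (HU _ _) _.
apply: lerD => //; apply: le_trans (HU _ _) _.
apply: lerD => //; apply: le_trans (HU _ _) _.
apply: lerD => //; apply: le_trans (HU _ _) _.
by apply: lerD.
Qed.

End Main.

Theorem lemma9 (R : realType) (X Y Z Xh : finType) (n M L : nat)
  (PX : X -> R) (PYX : X -> Y -> R) (PZX : X -> Z -> R)
  (d : X -> Xh -> R)
  (f : vec n Y -> 'I_L) (g : {ffun 'I_M -> 'I_L} -> vec n Z -> 'I_M)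
  (h : 'I_L -> vec n Z -> vec n Xh) (D Rc Ri eta : R)
  (QY : vec n Y -> R)
  (QZ_SY : 'I_L -> vec n Y -> vec n Z -> R)
  (QX_SYZ : 'I_L -> vec n Y -> vec n Z -> vec n X -> R)
  (QXY_SZXh : 'I_L -> vec n Z -> vec n Xh -> (vec n X * vec n Y) -> R)
  (QYZ_S : 'I_L -> (vec n Y * vec n Z) -> R)
  (QZ : vec n Z -> R) :
  (0 < n)%N -> (0 < M)%N -> (0 < L)%N ->
  is_pmf PX -> is_cond_pmf PYX -> is_cond_pmf PZX ->
  is_pmf QY ->
  (forall s, is_cond_pmf (QZ_SY s)) ->
  (forall s y, is_cond_pmf (QX_SYZ s y)) ->
  (forall s z, is_cond_pmf (QXY_SZXh s z)) ->
  is_cond_pmf QYZ_S ->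
  is_pmf QZ ->
  0 < eta ->
  n%:R^-1 * ln (L%:R : R) <= Rc ->
  n%:R^-1 * ln (M%:R : R) >= Ri ->
  Pc PX PYX PZX f h g d D <=
    PWT_prob (M:=M) PX PYX PZX f h
      (A_all (M:=M) PX PYX PZX f h QY QZ_SY QX_SYZ QXY_SZXh QYZ_S QZ eta Rc Ri d D)
    + 6 * expR (- (n%:R * eta)).
Proof.
move=> n0 M0 L0 HPX HPYX HPZX HQY HQ2 HQ3 HQ4 HQ5 HQZ eta0 HL HM.
exact: main_sec.
Qed.
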